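(* Let $p\ge 4$ be an integer and let $(a_n)_{n\ge0}$ be the sequence defined by $a_0=0$, $a_1=1$, $a_2=p-1$ and $a_{n+3}=(p-1)a_{n+2}-(p-1)a_{n+1}+a_n$ for $n\ge 0$. Set $\beta_n=2(a_n+a_{n-1})-1$. Then for every $n\ge 1$, \[ \frac{(a_n+a_{n-1})^2}{p}-\frac{a_n+a_{n-1}}{p}=a_na_{n-1} \qquad\text{and}\qquad \beta_n^2=4p\,a_na_{n-1}+1. \] *)

(* Defs.v *)
From mathcomp Require Import all_boot all_order all_algebra.
Set Implicit Arguments. Unset Strict Implicit. Unset Printing Implicit Defensive.
Import GRing.Theory Num.Theory.
Local Open Scope ring_scope.

Fixpoint seq_a (p : int) (n : nat) {struct n} : int :=
  match n with
  | 0 => 0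
  | S n1 =>
    match n1 with
    | 0 => 1
    | S n2 =>
      match n2 with
      | 0 => p - 1
      | S m => (p - 1) * seq_a p n1 - (p - 1) * seq_a p n2 + seq_a p m
      end
    end
  end.

Definition beta (p : int) (n : nat) : int :=
  2 * (seq_a p n + seq_a p n.-1) - 1.

(* Main.v *)
Require Import Defs.
From mathcomp Require Import all_boot all_order all_algebra.
From mathcomp Require Import ring lra.
Import GRing.Theory Num.Theory.
Local Open Scope ring_scope.

Lemma recL (p : int) n :
  seq_a p n.+2 = (p - 2) * seq_a p n.+1 - seq_a p n + 1.
Proof.
elim: n => [|n IH]; first by rewrite /=; ring.
have -> : seq_a p n.+3 = (p - 1) * seq_a p n.+2 - (p - 1) * seq_a p n.+1 + seq_a p n by [].
have -> : seq_a p n = (p - 2) * seq_a p n.+1 - seq_a p n.+2 + 1 by rewrite IH; ring.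
ring.
Qed.

Definition Q (p x y : int) := x ^+ 2 + y ^+ 2 - (p - 2) * x * y - x - y.

Lemma Qinv (p : int) n : Q p (seq_a p n.+1) (seq_a p n) = 0.
Proof.
elim: n => [|n IH]; first by rewrite /Q /=; ring.
rewrite -IH /Q recL; ring.
Qed.

Theorem lemma3p13 (p : nat) (hp : (4 <= p)%N) (n : nat) (hn : (1 <= n)%N) :
  let a_n := seq_a (p%:Z) n in
  let a_n1 := seq_a (p%:Z) n.-1 in
  ((a_n + a_n1) ^+ 2)%:~R / (p%:R : rat) - (a_n + a_n1)%:~R / (p%:R : rat)
    = (a_n * a_n1)%:~R
  /\ beta (p%:Z) n ^+ 2 = 4 * p%:Z * a_n * a_n1 + 1.
Proof.
case: n hn => [//|m] _ /=.
have HQ := Qinv p%:Z m.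
set x := seq_a p%:Z m.+1 in HQ *; set y := seq_a p%:Z m in HQ *.
have key : (x + y) ^+ 2 - (x + y) = p%:Z * (x * y).
  have -> : (x + y) ^+ 2 - (x + y) = p%:Z * (x * y) + Q p%:Z x y by rewrite /Q; ring.
  by rewrite HQ addr0.
split; last first.
  rewrite /beta /=.
  have -> : (2 * (x + y) - 1) ^+ 2 = 4 * ((x + y) ^+ 2 - (x + y)) + 1 by ring.
  rewrite key; ring.
have hp0 : (p%:R : rat) != 0 by rewrite pnatr_eq0 -lt0n; apply: leq_trans hp.
rewrite -mulrBl -rmorphB /= key rmorphM /=.
change ((p%:R : rat) * (x * y)%:~R / p%:R = (x * y)%:~R).
by rewrite mulrAC divff // mul1r.
Qed.
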